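(* Let $X$ be a real Banach space, $f\in\Gamma_0(X)$ and $S_f^=\ne\emptyset$. Suppose there exist sequences $\{x_k\}\subset X$ and $\{x_k^*\}\subset X^*$ such that $x_k^*\in\partial f(x_k)$ for all $k$, $\|x_k\|\to\infty$, $\|x_k^*\|\to0$ as $k\to\infty$, and $\{f(x_k)\}$ is bounded below. Then for any $\varepsilon\in[0,|\partial f|_{\rm bd}]$ and any $g\in\mathrm{Ptb}(f,\varepsilon)$, the function $g-f$ is constant.
   Context: $\Gamma_0(X)$ denotes the class of extended-real-valued proper convex lower semicontinuous functions on $X$. For convex $f$, $\partial f(x):=\{x^*\in X^*\mid \langle x^*,u-x\rangle\le f(u)-f(x)\ \forall u\in X\}$ (empty if $x\notin\mathrm{dom}f$). $d(0,\emptyset)=+\infty$, $\inf\emptyset=+\infty$. $S_f:=\{x\mid f(x)\le0\}$, $S_f^=:=\{x\mid f(x)=0\}$. $|\partial f|_{\rm bd}:=\inf_{f(x)=0} d(0,\mathrm{bd}\,\partial f(x))$ (boundary in the norm topology of $X^*$). For $x\in S_f^=$, $\varepsilon\ge0$, $\delta\ge0$: $\tau(f,x,\varepsilon,\delta):=\inf_{u:\,f(u)\ge-\varepsilon\|u-x\|-\delta} d(0,\partial f(u))$ if $0\notin\mathrm{int}\,\partial f(x)$, and $\tau(f,x,\varepsilon,\delta):=d(0,\mathrm{bd}\,\partial f(x))$ if $0\in\mathrm{int}\,\partial f(x)$. Let $S_f\neq\emptyset$, $\varepsilon\ge0$. A function $g:X\to\mathbb{R}\cup\{+\infty\}$ is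 an $\varepsilon$-perturbation of $f$ if $S_g\ne\emptyset$, $g=f+p$ with $p:X\to\mathbb{R}$ convex, and there exist $x\in S_f^=$ and $\xi\ge0$ such that $\xi+|\partial f|_{\rm bd}-\tau(f,x,\xi,|p(x)|)\le\varepsilon$ and $|p(u)-p(x)|\le\xi\|u-x\|$ for all $u\in X$. The set of these is $\mathrm{Ptb}(f,\varepsilon)$. *)

(* Defs.v *)
From Stdlib Require Import Reals Lra Classical ClassicalEpsilon.
Open Scope R_scope.
Set Implicit Arguments.

Record BanachSpace := {
  bs_car :> Type;
  vzero : bs_car;
  vadd : bs_car -> bs_car -> bs_car;
  vopp : bs_car -> bs_car;
  vscal : R -> bs_car -> bs_car;
  vnorm : bs_car -> R;
  vadd_assoc : forall x y z, vadd x (vadd y z) = vadd (vadd x y) z;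
  vadd_comm : forall x y, vadd x y = vadd y x;
  vadd_0 : forall x, vadd vzero x = x;
  vadd_opp : forall x, vadd x (vopp x) = vzero;
  vscal_addr : forall a x y, vscal a (vadd x y) = vadd (vscal a x) (vscal a y);
  vscal_addl : forall a b x, vscal (a + b) x = vadd (vscal a x) (vscal b x);
  vscal_assoc : forall a b x, vscal a (vscal b x) = vscal (a * b) x;
  vscal_1 : forall x, vscal 1 x = x;
  vnorm_eq0 : forall x, vnorm x = 0 -> x = vzero;
  vnorm_scal : forall a x, vnorm (vscal a x) = Rabs a * vnorm x;
  vnorm_triangle : forall x y, vnorm (vadd x y) <= vnorm x + vnorm y;
  vcomplete : forall u : nat -> bs_car,
    (forall eps, 0 < eps -> exists N, forall m n, (N <= m)%nat -> (N <= n)%nat ->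
        vnorm (vadd (u m) (vopp (u n))) < eps) ->
    exists l, forall eps, 0 < eps -> exists N, forall n, (N <= n)%nat ->
        vnorm (vadd (u n) (vopp l)) < eps
}.

Arguments vzero {_}.
Arguments vadd {_}.
Arguments vopp {_}.
Arguments vscal {_}.
Arguments vnorm {_}.

Definition vsub {X : BanachSpace} (x y : X) : X := vadd x (vopp y).

Inductive ERbar := Fin (r : R) | PInf.

Definition Ele (a b : ERbar) : Prop :=
  match a, b with
  | _, PInf => True
  | Fin x, Fin y => x <= y
  | PInf, Fin _ => False
  end.

Definition Eaddr (a : ERbar) (r : R) : ERbar :=
  match a with Fin x => Fin (x + r) | PInf => PInf end.

(** infimum in [-oo? no] R ∪ {+oo}; inf of the empty set is +oo *)
Definition is_Einf (S : ERbar -> Prop) (v : ERbar) : Prop :=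
  (forall w, S w -> Ele v w) /\ (forall m, (forall w, S w -> Ele m w) -> Ele m v).

Definition Einf (S : ERbar -> Prop) : ERbar :=
  epsilon (inhabits PInf) (is_Einf S).

Definition is_dual {X : BanachSpace} (phi : X -> R) : Prop :=
  (forall x y, phi (vadd x y) = phi x + phi y) /\
  (forall a x, phi (vscal a x) = a * phi x) /\
  (exists M, forall x, Rabs (phi x) <= M * vnorm x).

Definition dnorm {X : BanachSpace} (phi : X -> R) : R :=
  match Einf (fun v => exists M, v = Fin M /\ 0 <= M /\
                 forall x, Rabs (phi x) <= M * vnorm x) with
  | Fin r => r
  | PInf => 0
  end.

(** subsets of X^* are predicates on functionals; they are intersected with is_dual *)
Definition dist0 {X : BanachSpace} (A : (X -> R) -> Prop) : ERbar :=
  Einf (fun v => exists phi, is_dual phi /\ A phi /\ v = Fin (dnorm phi)).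

Definition dinterior {X : BanachSpace} (A : (X -> R) -> Prop) (phi : X -> R) : Prop :=
  is_dual phi /\ exists r, 0 < r /\
    forall psi, is_dual psi -> dnorm (fun x => psi x - phi x) < r -> A psi.

Definition dboundary {X : BanachSpace} (A : (X -> R) -> Prop) (phi : X -> R) : Prop :=
  is_dual phi /\ forall r, 0 < r ->
    (exists psi, is_dual psi /\ A psi /\ dnorm (fun x => psi x - phi x) < r) /\
    (exists psi, is_dual psi /\ ~ A psi /\ dnorm (fun x => psi x - phi x) < r).

Definition zero_dual {X : BanachSpace} : X -> R := fun _ => 0.

Definition proper {X : BanachSpace} (f : X -> ERbar) : Prop :=
  exists x, f x <> PInf.

Definition convexE {X : BanachSpace} (f : X -> ERbar) : Prop :=
  forall x y rx ry t, f x = Fin rx -> f y = Fin ry -> 0 <= t <= 1 ->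
    Ele (f (vadd (vscal t x) (vscal (1 - t) y))) (Fin (t * rx + (1 - t) * ry)).

Definition lscE {X : BanachSpace} (f : X -> ERbar) : Prop :=
  forall x r, ~ Ele (f x) (Fin r) ->
    exists delta, 0 < delta /\ forall y, vnorm (vsub y x) < delta -> ~ Ele (f y) (Fin r).

Definition Gamma0 {X : BanachSpace} (f : X -> ERbar) : Prop :=
  proper f /\ convexE f /\ lscE f.

Definition convexR {X : BanachSpace} (p : X -> R) : Prop :=
  forall x y t, 0 <= t <= 1 ->
    p (vadd (vscal t x) (vscal (1 - t) y)) <= t * p x + (1 - t) * p y.

(** * Subdifferential (empty outside dom f) *)
Definition subdiff {X : BanachSpace} (f : X -> ERbar) (x : X) (phi : X -> R) : Prop :=
  is_dual phi /\ exists rx, f x = Fin rx /\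
    forall u, Ele (Fin (phi (vsub u x) + rx)) (f u).

Definition Sf {X : BanachSpace} (f : X -> ERbar) (x : X) : Prop := Ele (f x) (Fin 0).
Definition Sfeq {X : BanachSpace} (f : X -> ERbar) (x : X) : Prop := f x = Fin 0.

Definition bd_modulus {X : BanachSpace} (f : X -> ERbar) : ERbar :=
  Einf (fun v => exists x, f x = Fin 0 /\ v = dist0 (dboundary (subdiff f x))).

Definition tau {X : BanachSpace} (f : X -> ERbar) (x : X) (eps delta : R) : ERbar :=
  if excluded_middle_informative (dinterior (subdiff f x) zero_dual)
  then dist0 (dboundary (subdiff f x))
  else Einf (fun v => exists u,
          Ele (Fin (- eps * vnorm (vsub u x) - delta)) (f u) /\
          v = dist0 (subdiff f u)).

(** Ptb(f, eps); the inequality  xi + |∂f|_bd - tau <= eps  is read as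
    xi + |∂f|_bd <= eps + tau  in [0,+oo] *)
Definition Ptb {X : BanachSpace} (f : X -> ERbar) (eps : R) (g : X -> ERbar) : Prop :=
  (exists y, Sf g y) /\
  exists p : X -> R, convexR p /\ (forall u, g u = Eaddr (f u) (p u)) /\
  exists x xi, Sfeq f x /\ 0 <= xi /\
    Ele (Eaddr (bd_modulus f) xi) (Eaddr (tau f x xi (Rabs (p x))) eps) /\
    (forall u, Rabs (p u - p x) <= xi * vnorm (vsub u x)).

(* Main.v *)
Require Import Defs.
From Stdlib Require Import Reals Lra Classical ClassicalEpsilon.
From mathcomp Require classical_sets.
Open Scope R_scope.

Arguments vadd_assoc {_}. Arguments vadd_comm {_}. Arguments vadd_0 {_}.
Arguments vadd_opp {_}. Arguments vscal_addr {_}. Arguments vscal_addl {_}.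
Arguments vscal_assoc {_}. Arguments vscal_1 {_}. Arguments vnorm_eq0 {_}.
Arguments vnorm_scal {_}. Arguments vnorm_triangle {_}.

Section Vec.
Variable X : BanachSpace.
Implicit Types x y z a : X.

Lemma vadd_0r x : vadd x vzero = x.
Proof. rewrite vadd_comm; apply vadd_0. Qed.

Lemma vopp_uniq x y : vadd x y = vzero -> y = vopp x.
Proof.
  intro H.
  rewrite <- (vadd_0 y), <- (vadd_opp x), (vadd_comm x (vopp x)), <- vadd_assoc, H.
  apply vadd_0r.
Qed.

Lemma vscal_0 x : vscal 0 x = vzero.
Proof.
  assert (H : vadd (vscal 0 x) (vscal 0 x) = vscal 0 x).
  { rewrite <- vscal_addl. f_equal. ring. }
  assert (H2 : vadd (vscal 0 x) (vscal 0 x) = vadd (vscal 0 x) vzero) by (rewrite vadd_0r; exact H).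
  assert (H3 := f_equal (vadd (vopp (vscal 0 x))) H2).
  rewrite !vadd_assoc in H3. rewrite (vadd_comm (vopp _)), vadd_opp, !vadd_0 in H3. exact H3.
Qed.

Lemma vopp_scal x : vopp x = vscal (-1) x.
Proof.
  symmetry. apply vopp_uniq.
  rewrite <- (vscal_1 x) at 1. rewrite <- vscal_addl.
  replace (1 + -1) with 0 by ring. apply vscal_0.
Qed.

Lemma vnorm_opp x : vnorm (vopp x) = vnorm x.
Proof. rewrite vopp_scal, vnorm_scal. replace (Rabs (-1)) with 1 by (rewrite Rabs_left; lra). ring. Qed.

Lemma vnorm_0 : vnorm (@vzero X) = 0.
Proof. rewrite <- (vscal_0 vzero), vnorm_scal, Rabs_R0. ring. Qed.

Lemma vnorm_nonneg x : 0 <= vnorm x.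
Proof.
  assert (H := vnorm_triangle x (vopp x)). rewrite vadd_opp, vnorm_0, vnorm_opp in H. lra.
Qed.

Lemma vopp_opp x : vopp (vopp x) = x.
Proof. rewrite !vopp_scal, vscal_assoc. replace (-1 * -1) with 1 by ring. apply vscal_1. Qed.

Lemma vopp_add x y : vopp (vadd x y) = vadd (vopp x) (vopp y).
Proof. rewrite !vopp_scal. apply vscal_addr. Qed.

Lemma vadd_ACAC x y z a : vadd (vadd x y) (vadd z a) = vadd (vadd x z) (vadd y a).
Proof.
  rewrite <- !vadd_assoc. f_equal. rewrite !vadd_assoc. f_equal. apply vadd_comm.
Qed.

Lemma vsub_opp x y : vsub x y = vopp (vsub y x).
Proof. unfold vsub. rewrite vopp_add, vopp_opp. apply vadd_comm. Qed.

Lemma vsub_add x y : vadd (vsub x y) y = x.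
Proof. unfold vsub. rewrite <- vadd_assoc, (vadd_comm (vopp y)), vadd_opp. apply vadd_0r. Qed.

Lemma vnorm_rev x y : vnorm x - vnorm y <= vnorm (vsub x y).
Proof.
  assert (H := vnorm_triangle (vsub x y) y). rewrite vsub_add in H. lra.
Qed.

End Vec.

Definition is_inf (A : R -> Prop) (l : R) :=
  (forall a, A a -> l <= a) /\ (forall m, (forall a, A a -> m <= a) -> m <= l).

Definition Rinf (A : R -> Prop) : R := epsilon (inhabits 0) (is_inf A).

Lemma Rinf_spec (A : R -> Prop) a0 m :
  A a0 -> (forall a, A a -> m <= a) -> is_inf A (Rinf A).
Proof.
  intros H0 Hm. unfold Rinf. apply epsilon_spec.
  destruct (completeness (fun y => A (- y))) as [l [Hub Hl]].
  - exists (- m). intros y Hy. specialize (Hm _ Hy). lra.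
  - exists (- a0). rewrite Ropp_involutive. exact H0.
  - exists (- l). split.
    + intros a Ha. assert (- a <= l). { apply Hub. rewrite Ropp_involutive. exact Ha. } lra.
    + intros c Hc. assert (l <= - c). { apply Hl. intros y Hy. specialize (Hc _ Hy). lra. } lra.
Qed.

Lemma Einf_spec (S : ERbar -> Prop) :
  (forall w, S w -> Ele (Fin 0) w) -> is_Einf S (Einf S).
Proof.
  intro Hnn. unfold Einf. apply epsilon_spec.
  destruct (classic (exists r, S (Fin r))) as [[r0 Hr0] | Hno].
  - assert (Hi := Rinf_spec (fun r => S (Fin r)) r0 0 Hr0 (fun a Ha => Hnn _ Ha)).
    destruct Hi as [Hlb Hg].
    exists (Fin (Rinf (fun r => S (Fin r)))). split.
    + intros [w|] Hw; simpl; auto.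
    + intros [m|] Hm; simpl.
      * apply Hg. intros a Ha. exact (Hm _ Ha).
      * exact (Hm _ Hr0).
  - exists PInf. split.
    + intros [w|] Hw; simpl; auto. apply Hno; eauto.
    + intros [m|] Hm; simpl; auto.
Qed.

Lemma Einf_le (S : ERbar -> Prop) w :
  (forall w, S w -> Ele (Fin 0) w) -> S w -> Ele (Einf S) w.
Proof. intros H Hw. exact (proj1 (Einf_spec S H) w Hw). Qed.

Lemma Einf_ge (S : ERbar -> Prop) m :
  (forall w, S w -> Ele (Fin 0) w) -> (forall w, S w -> Ele m w) -> Ele m (Einf S).
Proof. intros H Hw. exact (proj2 (Einf_spec S H) m Hw). Qed.

Lemma Ele_trans a b c : Ele a b -> Ele b c -> Ele a c.
Proof. destruct a, b, c; simpl; intros; try lra; tauto. Qed.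
Section Dual.
Variable X : BanachSpace.

Definition dset (phi : X -> R) : ERbar -> Prop := fun v => exists M, v = Fin M /\ 0 <= M /\
                 forall x, Rabs (phi x) <= M * vnorm x.

Lemma dset_nn phi : forall w, dset phi w -> Ele (Fin 0) w.
Proof. intros w [M [-> [HM _]]]. simpl. exact HM. Qed.

Lemma dnorm_nonneg (phi : X -> R) : 0 <= dnorm phi.
Proof.
  unfold dnorm. fold (dset phi).
  assert (H := Einf_ge (dset phi) (Fin 0) (dset_nn phi) (dset_nn phi)).
  destruct (Einf (dset phi)); simpl in *; lra.
Qed.

Lemma dnorm_le (phi : X -> R) M : 0 <= M -> (forall x, Rabs (phi x) <= M * vnorm x) -> dnorm phi <= M.
Proof.
  intros HM Hb. unfold dnorm. fold (dset phi).
  assert (H := Einf_le (dset phi) (Fin M) (dset_nn phi) (ex_intro _ M (conj eq_refl (conj HM Hb)))).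
  destruct (Einf (dset phi)); simpl in *; [lra | contradiction].
Qed.

Lemma dnorm_bound (phi : X -> R) : is_dual phi -> forall x, Rabs (phi x) <= dnorm phi * vnorm x.
Proof.
  intros [_ [_ [M HM]]] x.
  assert (HM' : forall x, Rabs (phi x) <= Rabs M * vnorm x).
  { intro y. eapply Rle_trans. apply HM. apply Rmult_le_compat_r. apply vnorm_nonneg. apply Rle_abs. }
  assert (Hd : dnorm phi <= Rabs M) by (apply dnorm_le; [apply Rabs_pos | exact HM']).
  unfold dnorm in *. fold (dset phi) in *.
  assert (Hs := Einf_spec (dset phi) (dset_nn phi)). destruct Hs as [Hlb Hg].
  assert (Hle := Hlb _ (ex_intro _ (Rabs M) (conj eq_refl (conj (Rabs_pos M) HM')))).
  destruct (Einf (dset phi)) as [r|] eqn:E; [| simpl in Hle; contradiction].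
  apply Rnot_lt_le. intro Hlt.
  assert (Hn : 0 < vnorm x).
  { destruct (vnorm_nonneg _ x) as [h|h]; auto. rewrite <- h in Hlt. rewrite Rmult_0_r in Hlt.
    specialize (HM' x). rewrite <- h in HM'. lra. }
  set (c := Rabs (phi x) / vnorm x).
  assert (Hrc : r < c). { unfold c. apply Rmult_lt_reg_r with (vnorm x); auto. field_simplify; lra. }
  destruct (classic (forall w, dset phi w -> Ele (Fin c) w)) as [Hall | Hn2].
  - specialize (Hg _ Hall). simpl in Hg. lra.
  - apply not_all_ex_not in Hn2. destruct Hn2 as [w Hw].
    apply imply_to_and in Hw. destruct Hw as [[M' [-> [HM0 HMb]]] Hc]. simpl in Hc.
    specialize (HMb x). assert (M' < c) by lra.
    assert (M' * vnorm x < c * vnorm x) by (apply Rmult_lt_compat_r; auto).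
    unfold c in H0. field_simplify in H0; lra.
Qed.

Lemma dist0_nn (A : (X -> R) -> Prop) :
  forall w, (fun v => exists phi, is_dual phi /\ A phi /\ v = Fin (dnorm phi)) w -> Ele (Fin 0) w.
Proof. intros w [phi [_ [_ ->]]]. simpl. apply dnorm_nonneg. Qed.

Lemma dist0_ge0 (A : (X -> R) -> Prop) : Ele (Fin 0) (dist0 A).
Proof. unfold dist0. apply Einf_ge; [apply dist0_nn | apply dist0_nn]. Qed.

Lemma dist0_le (A : (X -> R) -> Prop) phi : is_dual phi -> A phi -> Ele (dist0 A) (Fin (dnorm phi)).
Proof. intros H1 H2. unfold dist0. apply Einf_le. apply dist0_nn. exists phi. auto. Qed.

End Dual.
Section HB.
Variable X : BanachSpace.

Definition subl (r : X -> R) :=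
  (forall x y, r (vadd x y) <= r x + r y) /\ (forall l x, 0 <= l -> r (vscal l x) <= l * r x).

Lemma subl_0 r : subl r -> r vzero = 0.
Proof.
  intros [Ha Hh]. assert (H1 := Ha vzero vzero). rewrite vadd_0 in H1.
  assert (H2 := Hh 0 vzero (Rle_refl 0)). rewrite vscal_0 in H2. lra.
Qed.

Lemma subl_hom r l x : subl r -> 0 <= l -> r (vscal l x) = l * r x.
Proof.
  intros Hr Hl. destruct Hl as [Hl|Hl].
  - apply Rle_antisym. apply (proj2 Hr); lra.
    assert (H := proj2 Hr (/ l) (vscal l x) (Rlt_le _ _ (Rinv_0_lt_compat _ Hl))).
    rewrite vscal_assoc, Rinv_l, vscal_1 in H by lra.
    apply Rmult_le_reg_l with (/ l). apply Rinv_0_lt_compat; lra.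
    rewrite <- Rmult_assoc, Rinv_l, Rmult_1_l by lra. exact H.
  - subst. rewrite vscal_0, Rmult_0_l. apply subl_0; auto.
Qed.

Lemma subl_lower r x : subl r -> - r (vopp x) <= r x.
Proof.
  intros Hr. assert (H := proj1 Hr x (vopp x)). rewrite vadd_opp, subl_0 in H; auto. lra.
Qed.

Definition Tf (r : X -> R) (a : X) (c : R) (x : X) : R :=
  Rinf (fun v => exists t, 0 <= t /\ v = r (vadd x (vscal t a)) - t * c).

Lemma Tf_is_inf r a c x : subl r -> c <= r a ->
  is_inf (fun v => exists t, 0 <= t /\ v = r (vadd x (vscal t a)) - t * c) (Tf r a c x).
Proof.
  intros Hr Hc. apply Rinf_spec with (r (vadd x (vscal 0 a)) - 0 * c) (- r (vopp x)).
  - exists 0. split; [lra | auto].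
  - intros v [t [Ht ->]].
    assert (H := proj1 Hr (vadd x (vscal t a)) (vopp x)).
    assert (E : vadd (vadd x (vscal t a)) (vopp x) = vscal t a).
    { rewrite (vadd_comm x), <- vadd_assoc, vadd_opp. apply vadd_0r. }
    rewrite E, subl_hom in H; auto.
    assert (t * c <= t * r a) by (apply Rmult_le_compat_l; auto). lra.
Qed.

Lemma Tf_le r a c x t : subl r -> c <= r a -> 0 <= t -> Tf r a c x <= r (vadd x (vscal t a)) - t * c.
Proof. intros Hr Hc Ht. apply (proj1 (Tf_is_inf r a c x Hr Hc)). exists t; auto. Qed.

Lemma Tf_ge r a c x m : subl r -> c <= r a ->
  (forall t, 0 <= t -> m <= r (vadd x (vscal t a)) - t * c) -> m <= Tf r a c x.
Proof.
  intros Hr Hc H. apply (proj2 (Tf_is_inf r a c x Hr Hc)). intros v [t [Ht ->]]. auto.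
Qed.

Lemma Tf_le_r r a c x : subl r -> c <= r a -> Tf r a c x <= r x.
Proof.
  intros Hr Hc. eapply Rle_trans. apply (Tf_le r a c x 0); auto; lra.
  rewrite vscal_0, vadd_0r. lra.
Qed.

Lemma Tf_subl r a c : subl r -> c <= r a -> subl (Tf r a c).
Proof.
  intros Hr Hc. split.
  - intros x y.
    assert (K : forall t1 t2, 0 <= t1 -> 0 <= t2 -> Tf r a c (vadd x y) <=
       (r (vadd x (vscal t1 a)) - t1 * c) + (r (vadd y (vscal t2 a)) - t2 * c)).
    { intros t1 t2 H1 H2. eapply Rle_trans. apply (Tf_le r a c _ (t1 + t2)); auto; lra.
      rewrite vscal_addl, vadd_ACAC.
      assert (H := proj1 Hr (vadd x (vscal t1 a)) (vadd y (vscal t2 a))). lra. }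
    assert (Tf r a c (vadd x y) - Tf r a c y <= Tf r a c x).
    { apply Tf_ge; auto. intros t1 H1.
      assert (Tf r a c (vadd x y) - (r (vadd x (vscal t1 a)) - t1 * c) <= Tf r a c y).
      { apply Tf_ge; auto. intros t2 H2. specialize (K t1 t2 H1 H2). lra. }
      lra. }
    lra.
  - intros l x Hl. destruct Hl as [Hl|Hl].
    + assert (Tf r a c (vscal l x) / l <= Tf r a c x).
      { apply Tf_ge; auto. intros t Ht.
        assert (H := Tf_le r a c (vscal l x) (l * t) Hr Hc (Rmult_le_pos _ _ (Rlt_le _ _ Hl) Ht)).
        rewrite <- vscal_assoc, <- vscal_addr in H.
        rewrite (subl_hom r l _ Hr (Rlt_le _ _ Hl)) in H.
        apply Rmult_le_reg_l with l; auto.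
        replace (l * (Tf r a c (vscal l x) / l)) with (Tf r a c (vscal l x)) by (field; lra). nra. }
      apply Rmult_le_reg_l with (/ l). apply Rinv_0_lt_compat; lra.
      rewrite <- Rmult_assoc, Rinv_l, Rmult_1_l by lra. rewrite Rmult_comm. exact H.
    + subst. rewrite vscal_0, Rmult_0_l. eapply Rle_trans. apply Tf_le_r; auto.
      rewrite subl_0; auto; lra.
Qed.

Lemma norm_subl : subl (@vnorm X).
Proof.
  split. apply vnorm_triangle. intros l x Hl. rewrite vnorm_scal, Rabs_pos_eq; auto; lra.
Qed.

Variable w : X.

Definition good (q : X -> R) := subl q /\ (forall x, q x <= vnorm x) /\ q (vopp w) <= - vnorm w.
Definition GT := { q : X -> R | good q }.
Definition Rl (q1 q2 : GT) : Prop := forall x, proj1_sig q2 x <= proj1_sig q1 x.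
Definition Rb (q1 q2 : GT) : bool := if excluded_middle_informative (Rl q1 q2) then true else false.
Lemma RbP q1 q2 : Rb q1 q2 = true <-> Rl q1 q2.
Proof. unfold Rb. destruct excluded_middle_informative; split; auto; discriminate. Qed.

Lemma good_q0 : good (Tf (@vnorm X) w (vnorm w)).
Proof.
  split; [apply Tf_subl; [apply norm_subl | lra] |]. split.
  - intro x. apply Tf_le_r. apply norm_subl. lra.
  - eapply Rle_trans. apply (Tf_le _ w (vnorm w) (vopp w) 1). apply norm_subl. lra. lra.
    rewrite vscal_1, (vadd_comm (vopp w)), vadd_opp, vnorm_0. lra.
Qed.

Lemma good_lower q x : good q -> - vnorm x <= q x.
Proof.
  intros [Hs [Hp _]]. assert (H := subl_lower q x Hs). specialize (Hp (vopp x)).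
  rewrite vnorm_opp in Hp. lra.
Qed.

Lemma good_inf (A : GT -> Prop) (a0 : GT) : A a0 ->
  (forall s t, A s -> A t -> Rl s t \/ Rl t s) ->
  exists t : GT, forall s, A s -> Rl s t.
Proof.
  intros H0 Htot.
  set (Q := fun x => Rinf (fun v => exists q : GT, A q /\ v = proj1_sig q x)).
  assert (HQ : forall x, is_inf (fun v => exists q : GT, A q /\ v = proj1_sig q x) (Q x)).
  { intro x. apply Rinf_spec with (proj1_sig a0 x) (- vnorm x).
    exists a0; auto. intros v [q [_ ->]]. apply good_lower. exact (proj2_sig q). }
  assert (Hle : forall x (q : GT), A q -> Q x <= proj1_sig q x).
  { intros x q Hq. apply (proj1 (HQ x)). exists q; auto. }
  assert (Hge : forall x m, (forall q : GT, A q -> m <= proj1_sig q x) -> m <= Q x).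
  { intros x m H. apply (proj2 (HQ x)). intros v [q [Hq ->]]. auto. }
  assert (G : good Q).
  { destruct (proj2_sig a0) as [Hs0 [Hp0 Hw0]].
    split; [split|split].
    - intros x y.
      assert (Q (vadd x y) - Q y <= Q x).
      { apply Hge. intros q1 H1.
        assert (Q (vadd x y) - proj1_sig q1 x <= Q y).
        { apply Hge. intros q2 H2.
          destruct (Htot q1 q2 H1 H2) as [R12|R21].
          - assert (E := Hle (vadd x y) q2 H2).
            assert (E2 := proj1 (proj1 (proj2_sig q2)) x y). specialize (R12 x). lra.
          - assert (E := Hle (vadd x y) q1 H1).
            assert (E2 := proj1 (proj1 (proj2_sig q1)) x y). specialize (R21 y). lra. }
        lra. }
      lra.
    - intros l x Hl. destruct Hl as [Hl|Hl].
      + assert (Q (vscal l x) / l <= Q x).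
        { apply Hge. intros q Hq. assert (E := Hle (vscal l x) q Hq).
          rewrite (subl_hom _ l x (proj1 (proj2_sig q)) (Rlt_le _ _ Hl)) in E.
          apply Rmult_le_reg_l with l; auto.
          replace (l * (Q (vscal l x) / l)) with (Q (vscal l x)) by (field; lra). nra. }
        apply Rmult_le_reg_l with (/ l). apply Rinv_0_lt_compat; lra.
        rewrite <- Rmult_assoc, Rinv_l, Rmult_1_l by lra. rewrite Rmult_comm. exact H.
      + subst. rewrite vscal_0, Rmult_0_l. eapply Rle_trans. apply (Hle _ a0 H0).
        rewrite subl_0; auto; lra.
    - intro x. eapply Rle_trans. apply (Hle _ a0 H0). auto.
    - eapply Rle_trans. apply (Hle _ a0 H0). auto. }
  exists (exist _ Q G). intros s Hs x. simpl. auto.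
Qed.

Lemma HB_w : exists q : X -> R, is_dual q /\ (forall x, Rabs (q x) <= vnorm x) /\ q w = vnorm w.
Proof.
  set (t0 := exist good _ good_q0 : GT).
  destruct (@classical_sets.ZL_preorder GT t0 Rb) as [q Hmax].
  - intro t. apply RbP. intro x. lra.
  - intros r s t H1 H2. apply RbP. apply RbP in H1. apply RbP in H2. intro x.
    specialize (H1 x). specialize (H2 x). lra.
  - intros A Htot. destruct (classic (exists a, A a)) as [[a0 Ha0]|Hno].
    + destruct (good_inf A a0 Ha0) as [t Ht].
      * intros s t Hs Ht. destruct (Htot s t Hs Ht) as [h|h]; apply RbP in h; auto.
      * exists t. intros s Hs. apply RbP. auto.
    + exists t0. intros s Hs. exfalso. apply Hno. eauto.
  - destruct q as [q [Hs [Hp Hw]]].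
    assert (Hopp : forall a, q (vopp a) = - q a).
    { intro a.
      set (q' := Tf q a (q a)).
      assert (G : good q').
      { split; [apply Tf_subl; auto; lra|]. split.
        - intro x. eapply Rle_trans. apply Tf_le_r; auto; lra. auto.
        - eapply Rle_trans. apply Tf_le_r; auto; lra. auto. }
      assert (Hr : Rb (exist _ q (conj Hs (conj Hp Hw))) (exist _ q' G) = true).
      { apply RbP. intro x. simpl. apply Tf_le_r; auto; lra. }
      specialize (Hmax _ Hr). apply RbP in Hmax. specialize (Hmax (vopp a)). simpl in Hmax.
      assert (E := Tf_le q a (q a) (vopp a) 1 Hs (Rle_refl _) ltac:(lra)).
      rewrite vscal_1, (vadd_comm (vopp a)), vadd_opp, subl_0 in E; auto.
      assert (E2 := subl_lower q a Hs). unfold q' in Hmax. lra. }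
    assert (Hadd : forall x y, q (vadd x y) = q x + q y).
    { intros x y. apply Rle_antisym. apply (proj1 Hs).
      assert (H := proj1 Hs (vopp x) (vopp y)). rewrite <- vopp_add, !Hopp in H. lra. }
    assert (Hsc : forall l x, q (vscal l x) = l * q x).
    { intros l x. destruct (Rle_lt_dec 0 l) as [Hl|Hl]. apply subl_hom; auto.
      replace (vscal l x) with (vopp (vscal (- l) x)).
      rewrite Hopp, subl_hom; auto; lra.
      rewrite vopp_scal, vscal_assoc. f_equal. ring. }
    assert (Hb : forall x, Rabs (q x) <= vnorm x).
    { intro x. apply Rabs_le. split; auto. assert (H := Hp (vopp x)). rewrite Hopp, vnorm_opp in H. lra. }
    exists q. split; [|split; auto].
    + split; auto. split; auto. exists 1. intro x. rewrite Rmult_1_l. auto.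
    + apply Rle_antisym; auto. assert (Hw' := Hw). rewrite Hopp in Hw'. lra.
Qed.

End HB.

Theorem mainTheorem6 (X : BanachSpace) (f : X -> ERbar)
  (hf : Gamma0 f) (hS : exists x, Sfeq f x)
  (xs : nat -> X) (xss : nat -> X -> R)
  (hsub : forall k, subdiff f (xs k) (xss k))
  (hxinf : forall M, exists N, forall k, (N <= k)%nat -> M <= vnorm (xs k))
  (hxs0 : Un_cv (fun k => dnorm (xss k)) 0)
  (hbdd : exists m, forall k, Ele (Fin m) (f (xs k))) :
  forall (eps : R), 0 <= eps -> Ele (Fin eps) (bd_modulus f) ->
  forall g : X -> ERbar, Ptb f eps g ->
  exists c : R, forall x, g x = Eaddr (f x) c.
Proof.
  intros eps Heps Hbd g [[y Hy] [p [Hpc [Hg [x [xi [Hx [Hxi [Hineq Hlip]]]]]]]]].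
  assert (Hxi0 : xi = 0).
  { destruct Hxi as [Hxi|Hxi]; [exfalso | auto].
    destruct hbdd as [m Hm].
    assert (Hpick : forall e M, 0 < e -> exists k, dnorm (xss k) < e /\ M <= vnorm (xs k)).
    { intros e M He. destruct (hxs0 e He) as [N1 HN1]. destruct (hxinf M) as [N2 HN2].
      exists (max N1 N2). split.
      - specialize (HN1 (max N1 N2) (Nat.le_max_l _ _)). unfold R_dist in HN1.
        rewrite Rminus_0_r in HN1. eapply Rle_lt_trans; [apply Rle_abs | exact HN1].
      - apply HN2. apply Nat.le_max_r. }
    unfold tau in Hineq. destruct excluded_middle_informative as [Hint | Hnint].
    - destruct Hint as [_ [r [Hr Hball]]].
      destruct (Hpick (r / 2) (vnorm x + 1)) as [k [Hdk Hnk]]; [lra|].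
      set (w := vsub (xs k) x).
      assert (Hw1 : 1 <= vnorm w) by (assert (H := vnorm_rev _ (xs k) x); unfold w; lra).
      destruct (HB_w X w) as [q [[Hqa [Hqs _]] [Hqb Hqw]]].
      set (psi := fun v => r / 2 * q v).
      assert (Hpsi : is_dual psi).
      { unfold psi. split; [|split].
        - intros a b. rewrite Hqa. ring.
        - intros l a. rewrite Hqs. ring.
        - exists (r / 2). intro v. rewrite Rabs_mult, Rabs_pos_eq by lra.
          apply Rmult_le_compat_l; [lra | auto]. }
      assert (Hdn : dnorm (fun v => psi v - zero_dual v) < r).
      { eapply Rle_lt_trans; [apply (dnorm_le _ _ (r / 2)) | lra]. lra.
        intro v. unfold psi, zero_dual. rewrite Rminus_0_r, Rabs_mult, Rabs_pos_eq by lra.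
        apply Rmult_le_compat_l; [lra | auto]. }
      destruct (Hball psi Hpsi Hdn) as [_ [rx [Hfx Hu]]].
      unfold Sfeq in Hx. rewrite Hx in Hfx. injection Hfx as <-.
      specialize (Hu (xs k)).
      destruct (hsub k) as [Hdk' [rk [Hfk Hk]]].
      specialize (Hk x). rewrite Hx in Hk. rewrite Hfk in Hu. simpl in Hk, Hu.
      assert (Hb := dnorm_bound _ (xss k) Hdk' (vsub x (xs k))).
      rewrite vsub_opp, vnorm_opp in Hb. rewrite vsub_opp in Hk. fold w in Hb, Hu, Hk.
      unfold psi in Hu. rewrite Hqw in Hu.
      assert (H1 := Rle_abs (- xss k (vopp w))). rewrite Rabs_Ropp in H1.
      assert (H2 : dnorm (xss k) * vnorm w < r / 2 * vnorm w)
        by (apply Rmult_lt_compat_r; lra).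
      lra.
    - set (K := (Rabs m + Rabs (p x)) / xi).
      assert (HK : xi * K = Rabs m + Rabs (p x)) by (unfold K; field; lra).
      destruct (Hpick xi (vnorm x + K + 1)) as [k [Hdk Hnk]]; [lra|].
      assert (Hw := vnorm_rev _ (xs k) x).
      destruct (hsub k) as [Hdk' [rk [Hfk Hk]]].
      set (S := fun v : ERbar => exists u : X,
          Ele (Fin (- xi * vnorm (vsub u x) - Rabs (p x))) (f u) /\ v = dist0 (subdiff f u)).
      fold S in Hineq.
      assert (HS : Ele (Einf S) (Fin (dnorm (xss k)))).
      { eapply Ele_trans. apply Einf_le.
        - intros v [u [_ ->]]. apply dist0_ge0.
        - exists (xs k). split; [| reflexivity].
          rewrite Hfk. specialize (Hm k). rewrite Hfk in Hm. simpl in Hm |- *.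
          assert (H0 : 0 <= Rabs (p x)) by apply Rabs_pos.
          assert (H3 := Rle_abs (- m)). rewrite Rabs_Ropp in H3.
          nra.
        - apply dist0_le; [exact Hdk' | split; [exact Hdk' | exists rk; auto]]. }
      destruct (Einf S) as [t|]; [| simpl in HS; contradiction].
      destruct (bd_modulus f) as [b|]; simpl in *; [lra | contradiction]. }
  exists (p x). intro u. rewrite Hg. f_equal.
  specialize (Hlip u). rewrite Hxi0, Rmult_0_l in Hlip.
  assert (H1 := Rle_abs (p u - p x)). assert (H2 := Rle_abs (- (p u - p x))).
  rewrite Rabs_Ropp in H2. lra.
Qed.
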